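(* Let $(S,M)$ be a surface with marked points and empty boundary. (a) If $(S,M)$ is not a sphere with $4$ or $5$ punctures, it has an ideal triangulation satisfying (T4). (b) If $(S,M)$ is a sphere with $5$ punctures, it has an ideal triangulation satisfying (T3$\tfrac12$), but no ideal triangulation satisfying (T4). (c) If $(S,M)$ is a sphere with $4$ punctures, it has an ideal triangulation satisfying (T3), but no ideal triangulation satisfying (T3$\tfrac12$).
   Context: $(S,M)$: $S$ compact, connected, oriented surface without boundary, $M$ a finite non-empty set of punctures, admitting ideal triangulations (not a sphere with fewer than four punctures). Arcs incident to a puncture are counted with multiplicity (an arc with both endpoints at the puncture counts twice). (T3): at each puncture at least three arcs of $T$ are incident. (T3$\tfrac12$): $T$ has (T3) and every arc of $T$ has an endpoint with at least four incident arcs. (T4): at each puncture at least four arcs of $T$ are incident. *)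

(* Defs.v *)
From mathcomp Require Import all_boot.
Set Implicit Arguments. Unset Strict Implicit. Unset Printing Implicit Defensive.

(* Combinatorial encoding of an ideal triangulation of a punctured closed
   oriented surface as an oriented gluing of triangles (a combinatorial map).
   D      : darts = sides of the (oriented) triangles;
   face d : the next side of the triangle containing d (counterclockwise);
   edge d : the side glued to d (with opposite orientation).
   The tail of a dart is a puncture; the tail of [face (edge d)] equals the
   tail of [d], and the orbits of [rot] are exactly the punctures. *)

Definition rot (D : finType) (face edge : D -> D) : D -> D :=
  fun d => face (edge d).

Definition nb_punctures (D : finType) (face edge : D -> D) : nat :=
  fcard (rot face edge) D.

(* number of arcs incident to the puncture at the tail of d, counted with
   multiplicity (a loop counts twice) *)
Definition valence (D : finType) (face edge : D -> D) (d : D) : nat :=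
  order (rot face edge) d.

Definition ideal_triangulation (D : finType) (face edge : D -> D)
  (g p : nat) : Prop :=
  [/\ (forall d, face (face (face d)) = d),
      (forall d, face d != d),
      (forall d, edge (edge d) = d),
      (forall d, edge d != d) &
      (forall x y : D, connect (fun a b => (b == face a) || (b == edge a)) x y)]
  /\ nb_punctures face edge = p
  (* Euler characteristic: V - E + F = 2 - 2g *)
  /\ p + #|D| %/ 3 + 2 * g = #|D| %/ 2 + 2.

Definition T3 (D : finType) (face edge : D -> D) : Prop :=
  forall d, 3 <= valence face edge d.

Definition T3half (D : finType) (face edge : D -> D) : Prop :=
  T3 face edge /\
  forall d, 4 <= valence face edge d \/ 4 <= valence face edge (edge d).

Definition T4 (D : finType) (face edge : D -> D) : Prop :=
  forall d, 4 <= valence face edge d.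

(* Main.v *)
From HB Require Import structures.
Require Import Defs.
From mathcomp Require Import all_boot zify.
Set Implicit Arguments. Unset Strict Implicit. Unset Printing Implicit Defensive.

Section Orb.
Variables (T : finType) (f : T -> T).
Hypothesis finj : injective f.

Lemma rsym : connect_sym (frel f).
Proof. exact: fconnect_sym. Qed.

Lemma sum_orders : #|T| = \sum_(r | froots f r) order f r.
Proof.
rewrite -sum1_card (partition_big (froot f) (froots f)) /=; last first.
  by move=> x _; apply: roots_root; exact: rsym.
apply: eq_bigr => r rr; rewrite sum1_card; apply: eq_card => x.
have -> : (x \in fconnect f r) = fconnect f r x by [].
have -> : (x \in (fun i => froot f i == r)) = (froot f x == r) by [].
apply/eqP/idP => [hx | hc].
  by rewrite fconnect_sym // -hx; exact: connect_root.
rewrite -(eqP rr); apply/(rootP rsym).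
by rewrite fconnect_sym.
Qed.

Lemma order_conn x y : fconnect f x y -> order f x = order f y.
Proof.
move=> cxy; apply: eq_card => z; exact: (same_connect rsym cxy).
Qed.

Lemma nroots : fcard f T = #|froots f|.
Proof. by apply: eq_card => x; rewrite !inE andbT. Qed.

Lemma sum_orders_ge k : (forall x, k <= order f x) -> k * fcard f T <= #|T|.
Proof.
move=> hk; rewrite sum_orders nroots mulnC.
have -> : #|froots f| * k = \sum_(i in froots f) k by rewrite sum_nat_const.
by apply: leq_sum.
Qed.
End Orb.

Lemma order2 (T : finType) (e : T -> T) :
  (forall d, e (e d) = d) -> (forall d, e d != d) -> forall x, order e x = 2.
Proof.
move=> ee ne x.
have einj : injective e by apply: (can_inj ee).
have := @order_cycle T e [:: x; e x]; rewrite /= ee eqxx !andbT.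
rewrite inE eq_sym ne /=. move=> h. by apply: h; rewrite ?inE ?eqxx.
Qed.

Section Basic.
Variables (D : finType) (face edge : D -> D).
Hypothesis f3 : forall d, face (face (face d)) = d.
Hypothesis e2 : forall d, edge (edge d) = d.
Hypothesis ene : forall d, edge d != d.

Lemma face_inj : injective face.
Proof. by apply: (can_inj (g := fun d => face (face d))) => d; rewrite f3. Qed.
Lemma edge_inj : injective edge.
Proof. exact: (can_inj e2). Qed.
Lemma drot_inj : injective (Defs.rot face edge).
Proof. by move=> x y /face_inj /edge_inj. Qed.

Lemma card_even : 2 * fcard edge D = #|D|.
Proof.
rewrite mulnC; apply: fcard_order_set; first exact: edge_inj.
  by apply/subsetP => x _; rewrite inE order2.
by move=> x y _.
Qed.
End Basic.

Lemma not_T4_5 (D : finType) (face edge : D -> D) :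
  ~ (ideal_triangulation face edge 0 5 /\ T4 face edge).
Proof.
case=> [[[f3 fne e2 ene conn] [np eu]] t4].
have h1 := sum_orders_ge (drot_inj f3 e2) t4.
rewrite /nb_punctures in np; rewrite np in h1.
have h2 := card_even e2 ene.
lia.
Qed.

Lemma not_T3half_4 (D : finType) (face edge : D -> D) :
  ~ (ideal_triangulation face edge 0 4 /\ T3half face edge).
Proof.
case=> [[[f3 fne e2 ene conn] [np eu]] [t3 th]].
have rinj := drot_inj f3 e2.
have h1 := sum_orders_ge rinj t3.
rewrite /nb_punctures in np; rewrite np in h1.
have h2 := card_even e2 ene.
have n12 : #|D| = 12 by lia.
have [d0 _] : exists d0, d0 \in D by apply/card_gt0P; rewrite n12.
suff [d hd] : exists d, 4 <= valence face edge d.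
  have := sum_orders rinj; rewrite n12.
  set r := froot (Defs.rot face edge) d.
  have rr : froots (Defs.rot face edge) r by apply: roots_root; exact: rsym.
  have hr : 4 <= order (Defs.rot face edge) r.
    rewrite -(order_conn rinj (connect_root _ d)); exact: hd.
  rewrite (bigD1 r rr) /=.
  have : 3 * #|[pred i | froots (Defs.rot face edge) i & i != r]| <=
         \sum_(i | froots (Defs.rot face edge) i && (i != r)) order (Defs.rot face edge) i.
    rewrite mulnC -sum_nat_const; apply: leq_sum => i _; exact: t3.
  have : #|froots (Defs.rot face edge)| = 4 by rewrite -nroots.
  rewrite (cardD1 r) [r \in _]rr.
  have -> : #|[predD1 froots (Defs.rot face edge) & r]| =
     #|[pred i | froots (Defs.rot face edge) i & i != r]|.
    by apply: eq_card => i; rewrite !inE andbC.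
  rewrite add1n => ha hb hc.
  move: ha hb hc hr; set c := #|_|; set S := \sum_(_ | _) _; set o := order _ r.
  move=> ha hb hc hr; lia.
by case: (th d0) => h; [exists d0 | exists (edge d0)].
Qed.

Section Lab.
Variables (T K : finType) (f : T -> T) (lab : T -> K).
Hypothesis finj : injective f.
Hypothesis labf : forall x, lab (f x) = lab x.
Hypothesis labc : forall x y, lab x = lab y -> fconnect f x y.

Lemma lab_inv_conn x y : fconnect f x y -> lab x = lab y.
Proof.
move=> /iter_findex <-; elim: (findex f x y) => //= n ->; by rewrite labf.
Qed.

Lemma order_lab x : order f x = #|[pred y | lab y == lab x]|.
Proof.
apply: eq_card => y.
have -> : (y \in fconnect f x) = fconnect f x y by [].
rewrite inE /=.
apply/idP/eqP => [h|h]; first by rewrite (lab_inv_conn h).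
exact: labc.
Qed.

Lemma fcard_lab : fcard f T = #|[set lab x | x in T]|.
Proof.
rewrite nroots.
have -> : [set lab x | x in T] = [set lab x | x in froots f].
  apply/setP => k; apply/imsetP/imsetP => [[x _ ->]|[x _ ->]]; last by exists x.
  exists (froot f x); first by apply: roots_root; exact: rsym.
  apply: lab_inv_conn; exact: connect_root.
rewrite card_in_imset // => x y rx ry /labc /(rootP (rsym finj)).
by rewrite (eqP rx) (eqP ry).
Qed.
End Lab.

Section Lift.
Variables (D D' : finType) (r : D -> D) (r' : D' -> D').
Hypotheses (rinj : injective r) (r'inj : injective r').
Variable (i : D -> D').
Hypothesis iinj : injective i.
Hypothesis sim : forall d, fconnect r' (i d) (i (r d)).
Variable lab' : D' -> option D.
Hypothesis lab_old : forall d, lab' (i d) = Some (froot r d).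
Hypothesis lab_inv : forall y, lab' (r' y) = lab' y.
Hypothesis rep : forall y c, lab' y = Some c -> exists d, fconnect r' y (i d).
Hypothesis none_conn : forall y z, lab' y = None -> lab' z = None -> fconnect r' y z.

Lemma sim_conn d e : fconnect r d e -> fconnect r' (i d) (i e).
Proof.
move=> /iter_findex <-; elim: (findex r d e) => //= n IH.
exact: connect_trans IH (sim _).
Qed.

Lemma lift_labc y z : lab' y = lab' z -> fconnect r' y z.
Proof.
case hy: (lab' y) => [c|] hz; last by apply: none_conn.
have [d cd] := rep hy.
have [e ce] := rep (esym hz).
have l1 := lab_inv_conn lab_inv cd.
have l2 := lab_inv_conn lab_inv ce.
rewrite hy lab_old in l1; rewrite -hz lab_old in l2.
case: l1 => l1; case: l2 => l2.
have /(rootP (rsym rinj)) de : froot r d = froot r e by rewrite -l1 -l2.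
apply: connect_trans cd _; apply: connect_trans (sim_conn de) _.
by rewrite fconnect_sym.
Qed.

Lemma lift_order d : order r d <= order r' (i d).
Proof.
rewrite (order_lab lab_inv lift_labc).
have -> : order r d = #|[set i x | x in fconnect r d]|.
  by rewrite card_imset //.
apply: subset_leq_card; apply/subsetP => y /imsetP [x hx ->].
rewrite inE /= !lab_old; apply/eqP; congr Some; apply/esym/(rootP (rsym rinj)).
exact: hx.
Qed.

Lemma lift_order_some y c : lab' y = Some c -> exists d, order r' y = order r' (i d).
Proof. by move=> /rep [d hd]; exists d; apply: order_conn. Qed.

Lemma lift_image :
  [set lab' y | y in D'] =
  [set Some c | c in [set froot r d | d in D]] :|: [set None | y in D' & lab' y == None].
Proof.
apply/setP => k; rewrite inE; apply/imsetP/orP => [[y _ ->]|].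
  case hy: (lab' y) => [c|].
    have [d cd] := rep hy.
    have := lab_inv_conn lab_inv cd; rewrite hy lab_old => ->.
    by left; apply: imset_f; apply: imset_f.
  by right; apply/imsetP; exists y; rewrite ?inE ?hy.
case=> /imsetP.
  by move=> [c /imsetP [d _ ->] ->]; exists (i d); rewrite ?lab_old.
by move=> [y]; rewrite inE => /eqP hy ->; exists y.
Qed.

Lemma card_old_image : #|[set froot r d | d in D]| = fcard r D.
Proof.
rewrite (fcard_lab (lab := froot r)) //.
  by move=> x; apply/esym/(rootP (rsym rinj)); exact: fconnect1.
by move=> x y /(rootP (rsym rinj)).
Qed.

Lemma lift_fcard_none : (exists y, lab' y = None) -> fcard r' D' = (fcard r D).+1.
Proof.
move=> [y0 hy0].
rewrite (fcard_lab (lab := lab')) // ?lift_image; last exact: lift_labc.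
have -> : [set None | y in D' & lab' y == None] = [set None :> option D].
  apply/setP => k; rewrite inE; apply/imsetP/eqP => [[y _ ->]//|->].
  by exists y0; rewrite ?inE ?hy0.
rewrite setUC cardsU1 card_imset; last by move=> a b [].
rewrite card_old_image.
suff -> : (None \notin [set Some c | c in [set froot r d | d in D]]) by [].
by apply/imsetP => -[c _].
Qed.

Lemma lift_fcard_some : (forall y, lab' y != None) -> fcard r' D' = fcard r D.
Proof.
move=> hs.
rewrite (fcard_lab (lab := lab')) // ?lift_image; last exact: lift_labc.
have -> : [set None | y in D' & lab' y == None] = set0 :> {set option D}.
  apply/setP => k; rewrite inE; apply/imsetP => -[y]; by rewrite inE (negbTE (hs y)).
by rewrite setU0 card_imset ?card_old_image // => a b [].
Qed.
End Lift.

Lemma conn_map (T T' : finType) (e : rel T) (e' : rel T') (i : T -> T') :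
  (forall a b, e a b -> connect e' (i a) (i b)) ->
  forall a b, connect e a b -> connect e' (i a) (i b).
Proof.
move=> H a b /connectP [pth pp ->]; elim: pth a pp => //= c pth IH a /andP [h1 h2].
exact: connect_trans (H _ _ h1) (IH _ h2).
Qed.

Definition E (D : finType) (face edge : D -> D) : rel D :=
  fun a b => (b == face a) || (b == edge a).

Lemma rot_connE (D : finType) (face edge : D -> D) u v :
  fconnect (Defs.rot face edge) u v -> connect (E face edge) u v.
Proof.
apply: (conn_map (i := id)) => a b /eqP <-.
apply: (connect_trans (y := edge a)); apply: connect1; by rewrite /E eqxx ?orbT.
Qed.

Lemma ideal_mk (D : finType) (face edge : D -> D) g p :
  (forall d, face (face (face d)) = d) -> (forall d, face d != d) ->
  (forall d, edge (edge d) = d) -> (forall d, edge d != d) ->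
  (forall x y, connect (E face edge) x y) ->
  nb_punctures face edge = p -> p + #|D| %/ 3 + 2 * g = #|D| %/ 2 + 2 ->
  ideal_triangulation face edge g p.
Proof. by move=> *; split; [split|split]. Qed.
Inductive N12 := H0 | H1 | H2 | H3 | H4 | H5 | H6 | H7 | H8 | H9 | H10 | H11.
Definition N12_nat (x : N12) : nat := match x with H0 => 0 | H1 => 1 | H2 => 2 | H3 => 3 | H4 => 4 | H5 => 5 | H6 => 6 | H7 => 7 | H8 => 8 | H9 => 9 | H10 => 10 | H11 => 11 end.
Definition nat_N12 (k : nat) : N12 := match k with 0 => H0 | 1 => H1 | 2 => H2 | 3 => H3 | 4 => H4 | 5 => H5 | 6 => H6 | 7 => H7 | 8 => H8 | 9 => H9 | 10 => H10 | _ => H11 end.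
Lemma N12_natK : cancel N12_nat nat_N12. Proof. by case. Qed.
HB.instance Definition _ := Countable.copy N12 (can_type N12_natK).
Definition N12_enum := [:: H0; H1; H2; H3; H4; H5; H6; H7; H8; H9; H10; H11].
Lemma N12_enumP : Finite.axiom N12_enum. Proof. by case. Qed.
HB.instance Definition _ := isFinite.Build N12 N12_enumP.

Inductive N6 := S1 | S2 | S3 | S4 | S5 | S6.
Definition N6_nat (x : N6) : nat := match x with S1 => 0 | S2 => 1 | S3 => 2 | S4 => 3 | S5 => 4 | S6 => 5 end.
Definition nat_N6 (k : nat) : N6 := match k with 0 => S1 | 1 => S2 | 2 => S3 | 3 => S4 | 4 => S5 | _ => S6 end.
Lemma N6_natK : cancel N6_nat nat_N6. Proof. by case. Qed.
HB.instance Definition _ := Countable.copy N6 (can_type N6_natK).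
Definition N6_enum := [:: S1; S2; S3; S4; S5; S6].
Lemma N6_enumP : Finite.axiom N6_enum. Proof. by case. Qed.
HB.instance Definition _ := isFinite.Build N6 N6_enumP.



Section Handle.
Variables (D : finType) (face edge : D -> D) (x : D).
Hypothesis f3 : forall d, face (face (face d)) = d.
Hypothesis fne : forall d, face d != d.
Hypothesis e2 : forall d, edge (edge d) = d.
Hypothesis ene : forall d, edge d != d.

Local Notation y := (face x).
Local Notation z := (face (face x)).
Local Notation D' := (D + N12)%type.

Definition hface (w : D') : D' :=
  match w with
  | inl d => if d == x then inr H10 else if d == y then inr H1
             else if d == z then inr H2 else inl (face d)
  | inr h => match h with
    | H1 => inr H6 | H6 => inl y | H9 => inr H7 | H7 => inr H0 | H0 => inr H9
    | H8 => inl z | H2 => inr H8 | H3 => inl x | H10 => inr H3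
    | H11 => inr H4 | H4 => inr H5 | H5 => inr H11 end
  end.

Definition hedge (w : D') : D' :=
  match w with
  | inl d => inl (edge d)
  | inr h => inr match h with
    | H11 => H6 | H6 => H11 | H4 => H3 | H3 => H4 | H10 => H7 | H7 => H10
    | H1 => H8 | H8 => H1 | H2 => H9 | H9 => H2 | H5 => H0 | H0 => H5 end
  end.

Lemma xy : (x == y) = false. Proof. by rewrite eq_sym (negbTE (fne x)). Qed.
Lemma yx : (y == x) = false. Proof. by rewrite (negbTE (fne x)). Qed.
Lemma yz : (y == z) = false. Proof. by rewrite eq_sym (negbTE (fne _)). Qed.
Lemma zy : (z == y) = false. Proof. by rewrite (negbTE (fne _)). Qed.
Lemma zx : (z == x) = false.
Proof. apply/negbTE/eqP => h; have := f3 x; rewrite h => /eqP; by rewrite (negbTE (fne x)). Qed.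
Lemma xz : (x == z) = false. Proof. by rewrite eq_sym zx. Qed.
Lemma fz : face z = x. Proof. exact: f3. Qed.

Lemma finj : injective face. Proof. exact: face_inj f3. Qed.

Lemma notin_face d : d != x -> d != y -> d != z ->
  [&& face d != x, face d != y & face d != z].
Proof.
move=> dx dy dz; apply/and3P; split; apply/eqP => h.
- by move/eqP: dz; apply; apply: finj; rewrite h fz.
- by move/eqP: dx; apply; apply: finj.
- by move/eqP: dy; apply; apply: finj.
Qed.

Ltac hs := rewrite /hface /hedge /= ?eqxx ?xy ?yx ?yz ?zy ?zx ?xz ?fz.

Lemma hf3 w : hface (hface (hface w)) = w.
Proof.
case: w => [d|[]] //; try by hs.
case: (eqVneq d x) => [->|dx]; first by hs.
case: (eqVneq d y) => [->|dy]; first by hs.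
case: (eqVneq d z) => [->|dz]; first by hs.
have /and3P [h1 h2 h3] := notin_face dx dy dz.
have /and3P [h4 h5 h6] := notin_face h1 h2 h3.
rewrite /hface (negbTE dx) (negbTE dy) (negbTE dz) (negbTE h1) (negbTE h2) (negbTE h3).
by rewrite (negbTE h4) (negbTE h5) (negbTE h6) f3.
Qed.

Lemma hfne w : hface w != w.
Proof.
case: w => [d|[]] //=.
by case: ifP => // _; case: ifP => // _; case: ifP => // _; rewrite inj_eq ?fne //; exact: inl_inj.
Qed.

Lemma he2 w : hedge (hedge w) = w.
Proof. by case: w => [d|[]] //=; rewrite e2. Qed.

Lemma hene w : hedge w != w.
Proof. by case: w => [d|[]] //=; rewrite inj_eq ?ene //; exact: inl_inj. Qed.

Local Notation r := (Defs.rot face edge).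
Local Notation r' := (Defs.rot hface hedge).


Lemma r'inj : injective r'. Proof. exact: drot_inj hf3 he2. Qed.
Lemma rinj : injective r. Proof. exact: drot_inj f3 e2. Qed.

Lemma hsim d : fconnect r' (inl d) (inl (r d)).
Proof.
rewrite /Defs.rot.
case: (eqVneq (edge d) x) => [ex|nx].
  have -> : inl (face (edge d)) = iter 4 r' (inl d) by rewrite /= /Defs.rot /= ex; hs.
  exact: fconnect_iter.
case: (eqVneq (edge d) y) => [ey|ny].
  have -> : inl (face (edge d)) = iter 2 r' (inl d) by rewrite /= /Defs.rot /= ey; hs.
  exact: fconnect_iter.
case: (eqVneq (edge d) z) => [ez|nz].
  have -> : inl (face (edge d)) = iter 9 r' (inl d) by rewrite /= /Defs.rot /= ez; hs.
  exact: fconnect_iter.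
have -> : inl (face (edge d)) = iter 1 r' (inl d).
  by rewrite /= /Defs.rot /= /hface (negbTE nx) (negbTE ny) (negbTE nz).
exact: fconnect_iter.
Qed.

Lemma froot_rot d : froot r (r d) = froot r d.
Proof. apply/esym/(rootP (rsym rinj)); exact: fconnect1. Qed.

Definition hlab (w : D') : option D :=
  match w with
  | inl d => Some (froot r d)
  | inr h => match h with
    | H10 | H0 | H11 => Some (froot r y)
    | H1 => Some (froot r z)
    | _ => Some (froot r x) end
  end.

Lemma hlab_inv w : hlab (r' w) = hlab w.
Proof.
case: w => [d|[]]; try by rewrite /Defs.rot /=; hs.
case: (eqVneq (edge d) x) => [ex|nx].
  have -> : r' (inl d) = inr H10 by rewrite /Defs.rot /= ex; hs.
  by rewrite /= -[in RHS]froot_rot /Defs.rot ex.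
case: (eqVneq (edge d) y) => [ey|ny].
  have -> : r' (inl d) = inr H1 by rewrite /Defs.rot /= ey; hs.
  by rewrite /= -[in RHS]froot_rot /Defs.rot ey.
case: (eqVneq (edge d) z) => [ez|nz].
  have -> : r' (inl d) = inr H2 by rewrite /Defs.rot /= ez; hs.
  by rewrite /= -[in RHS]froot_rot /Defs.rot ez fz.
have -> : r' (inl d) = inl (r d).
  by rewrite /Defs.rot /= /hface (negbTE nx) (negbTE ny) (negbTE nz).
by rewrite /= froot_rot.
Qed.

Lemma iter_conn n w v : iter n r' w = v -> fconnect r' w v.
Proof. move=> <-; exact: fconnect_iter. Qed.

Lemma hrep w : exists d, fconnect r' w (inl d).
Proof.
case: w => [d|[]]; first by exists d.
- by exists y; apply: (@iter_conn 2); rewrite /= /Defs.rot /=; hs.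
- by exists z; apply: (@iter_conn 1); rewrite /= /Defs.rot /=; hs.
- by exists x; apply: (@iter_conn 8); rewrite /= /Defs.rot /=; hs.
- by exists x; apply: (@iter_conn 6); rewrite /= /Defs.rot /=; hs.
- by exists x; apply: (@iter_conn 1); rewrite /= /Defs.rot /=; hs.
- by exists x; apply: (@iter_conn 5); rewrite /= /Defs.rot /=; hs.
- by exists x; apply: (@iter_conn 2); rewrite /= /Defs.rot /=; hs.
- by exists x; apply: (@iter_conn 7); rewrite /= /Defs.rot /=; hs.
- by exists x; apply: (@iter_conn 3); rewrite /= /Defs.rot /=; hs.
- by exists x; apply: (@iter_conn 4); rewrite /= /Defs.rot /=; hs.
- by exists y; apply: (@iter_conn 3); rewrite /= /Defs.rot /=; hs.
- by exists y; apply: (@iter_conn 1); rewrite /= /Defs.rot /=; hs.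
Qed.

Lemma hlabc w v : hlab w = hlab v -> fconnect r' w v.
Proof.
apply: (lift_labc rinj r'inj hsim (lab' := hlab)) => //.
- exact: hlab_inv.
- by move=> u c _; exact: hrep.
- by case=> [?|[]].
Qed.

Lemma h_fcard : nb_punctures hface hedge = nb_punctures face edge.
Proof.
rewrite /nb_punctures.
apply: (lift_fcard_some rinj r'inj hsim (lab' := hlab)) => //.
- exact: hlab_inv.
- by move=> u c _; exact: hrep.
- by case=> [?|[]].
- by case=> [?|[]].
Qed.

Lemma h_order w : exists d, order r d <= order r' w.
Proof.
have [d hd] := hrep w; exists d.
rewrite (order_conn r'inj hd).
apply: (lift_order rinj r'inj inl_inj hsim (lab' := hlab)) => //.
- exact: hlab_inv.
- by move=> u c _; exact: hrep.
- by case=> [?|[]].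
Qed.

Lemma h_conn : (forall a b, connect (E face edge) a b) ->
  forall a b, connect (E hface hedge) a b.
Proof.
move=> conn.
have old a b : connect (E hface hedge) (inl a) (inl b).
  apply: (conn_map (e := E face edge)) => // {}a {}b /orP [] /eqP ->.
    apply: (connect_trans (y := inl (edge a))).
      by apply: connect1; rewrite /E /= eqxx orbT.
    have := hsim (edge a); rewrite /Defs.rot e2 => h; exact: rot_connE h.
  by apply: connect1; rewrite /E /= eqxx orbT.
move=> a b.
have [da ha] := hrep a; have [db hb] := hrep b.
apply: connect_trans (rot_connE ha) _.
apply: connect_trans (old da db) _.
apply: rot_connE; by rewrite fconnect_sym //; exact: r'inj.
Qed.
End Handle.

Lemma card_N12 : #|{: N12}| = 12.
Proof. rewrite /= card.unlock /enum_mem /= Finite.enum.unlock. by vm_compute. Qed.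

Lemma handle_step (D : finType) (face edge : D -> D) g p :
  ideal_triangulation face edge g p -> T4 face edge -> 0 < p ->
  exists (D' : finType) (face' edge' : D' -> D'),
    ideal_triangulation face' edge' g.+1 p /\ T4 face' edge'.
Proof.
move=> [[f3 fne e2 ene conn] [np eu]] t4 p0.
have [x _] : exists x : D, x \in D.
  apply/card_gt0P; rewrite -np /nb_punctures in p0.
  by apply: leq_trans p0 _; rewrite nroots; apply: subset_leq_card; apply/subsetP.
exists (D + N12)%type, (hface face x), (hedge edge); split.
  apply: ideal_mk.
  - exact: hf3.
  - exact: hfne.
  - exact: he2.
  - exact: hene.
  - exact: h_conn.
  - by rewrite h_fcard.
  - rewrite card_sum card_N12; lia.
move=> w.
have [d hd] : exists d, order (Defs.rot face edge) d <= order (Defs.rot (hface face x) (hedge edge)) w.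
  by apply: h_order.
exact: leq_trans (t4 d) hd.
Qed.



Section Subdiv.
Variables (D : finType) (face edge : D -> D) (x : D).
Hypothesis f3 : forall d, face (face (face d)) = d.
Hypothesis fne : forall d, face d != d.
Hypothesis e2 : forall d, edge (edge d) = d.
Hypothesis ene : forall d, edge d != d.
Hypothesis hx1 : edge x != face x.
Hypothesis hx2 : edge x != face (face x).

Local Notation fx := (face x).
Local Notation ffx := (face (face x)).
Local Notation ex := (edge x).
Local Notation fex := (face (edge x)).
Local Notation ffex := (face (face (edge x))).
Local Notation D' := (D + N6)%type.

Definition sface (w : D') : D' :=
  match w with
  | inl d => if d == x then inr S1 else if d == fx then inr S3
             else if d == ex then inr S4 else if d == fex then inr S6 else inl (face d)
  | inr h => match h with
    | S1 => inl ffx | S2 => inl fx | S3 => inr S2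
    | S4 => inl ffex | S5 => inl fex | S6 => inr S5 end
  end.

Definition sedge (w : D') : D' :=
  match w with
  | inl d => if d == x then inr S5 else if d == ex then inr S2 else inl (edge d)
  | inr h => match h with
    | S5 => inl x | S2 => inl ex | S1 => inr S3 | S3 => inr S1
    | S4 => inr S6 | S6 => inr S4 end
  end.

Lemma sfinj : injective face. Proof. exact: face_inj f3. Qed.

Lemma neq_ff a : (face (face a) == a) = false.
Proof. apply/negbTE/eqP => h; have := f3 a; rewrite h => /eqP; by rewrite (negbTE (fne a)). Qed.
Lemma neq_ff' a : (a == face (face a)) = false.
Proof. by rewrite eq_sym neq_ff. Qed.
Lemma neq_f a : (face a == a) = false. Proof. exact/negbTE/fne. Qed.
Lemma neq_f' a : (a == face a) = false. Proof. by rewrite eq_sym neq_f. Qed.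
Lemma neq_fff a : (face (face a) == face a) = false. Proof. exact: neq_f. Qed.
Lemma neq_fff' a : (face a == face (face a)) = false. Proof. exact: neq_f'. Qed.

Lemma c1 : (ex == x) = false. Proof. exact/negbTE/ene. Qed.
Lemma c2 : (ex == fx) = false. Proof. exact/negbTE. Qed.
Lemma c3 : (ex == ffx) = false. Proof. exact/negbTE. Qed.
Lemma c4 : (fex == x) = false.
Proof. apply/negbTE/eqP => h; move/eqP: hx2; apply; have := congr1 (fun a => face (face a)) h; by rewrite /= f3. Qed.
Lemma c5 : (fex == fx) = false.
Proof. by rewrite (inj_eq sfinj) c1. Qed.
Lemma c6 : (fex == ffx) = false.
Proof. by rewrite (inj_eq sfinj) c2. Qed.
Lemma c7 : (ffex == x) = false.
Proof. apply/negbTE/eqP => h; move/eqP: hx1; apply; have := congr1 face h; by rewrite /= f3. Qed.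
Lemma c8 : (ffex == fx) = false.
Proof. by rewrite (inj_eq sfinj) c4. Qed.
Lemma c9 : (ffex == ffx) = false.
Proof. by rewrite (inj_eq sfinj) c5. Qed.
Lemma c1' : (x == ex) = false. Proof. by rewrite eq_sym c1. Qed.
Lemma c2' : (fx == ex) = false. Proof. by rewrite eq_sym c2. Qed.
Lemma c3' : (ffx == ex) = false. Proof. by rewrite eq_sym c3. Qed.
Lemma c4' : (x == fex) = false. Proof. by rewrite eq_sym c4. Qed.
Lemma c5' : (fx == fex) = false. Proof. by rewrite eq_sym c5. Qed.
Lemma c6' : (ffx == fex) = false. Proof. by rewrite eq_sym c6. Qed.
Lemma c7' : (x == ffex) = false. Proof. by rewrite eq_sym c7. Qed.
Lemma c8' : (fx == ffex) = false. Proof. by rewrite eq_sym c8. Qed.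
Lemma c9' : (ffx == ffex) = false. Proof. by rewrite eq_sym c9. Qed.

Ltac ss := do 4 rewrite /sface /sedge /= ?eqxx ?f3 ?e2 ?neq_f ?neq_f' ?neq_ff ?neq_ff' ?neq_fff ?neq_fff'
  ?c1 ?c2 ?c3 ?c4 ?c5 ?c6 ?c7 ?c8 ?c9 ?c1' ?c2' ?c3' ?c4' ?c5' ?c6' ?c7' ?c8' ?c9'.

Definition inA d := [|| d == x, d == fx, d == ffx, d == ex, d == fex | d == ffex].

Lemma notA_face d : ~~ inA d -> ~~ inA (face d).
Proof.
rewrite /inA => h; apply: contra h => /or4P [/eqP e|/eqP e|/eqP e|/or3P [/eqP e|/eqP e|/eqP e]].
- by have := congr1 (fun a => face (face a)) e; rewrite /= f3 => ->; rewrite eqxx !orbT.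
- by move/sfinj: e => ->; rewrite eqxx.
- by move/sfinj: e => ->; rewrite eqxx orbT.
- by have := congr1 (fun a => face (face a)) e; rewrite /= f3 => ->; rewrite eqxx !orbT.
- by move/sfinj: e => ->; rewrite eqxx !orbT.
- by move/sfinj: e => ->; rewrite eqxx !orbT.
Qed.

Lemma sf_old d : ~~ inA d -> sface (inl d) = inl (face d).
Proof.
rewrite /inA /sface => h.
by move: h; case: (d == x); case: (d == fx); case: (d == ffx); case: (d == ex);
  case: (d == fex); case: (d == ffex).
Qed.

Lemma sf3 w : sface (sface (sface w)) = w.
Proof.
case: w => [d|[]]; try by ss.
case hA: (inA d); last first.
  have h1 := notA_face (negbT hA); have h2 := notA_face h1.
  by rewrite (sf_old (negbT hA)) (sf_old h1) (sf_old h2) f3.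
move: hA; rewrite /inA => /or4P [/eqP->|/eqP->|/eqP->|/or3P [/eqP->|/eqP->|/eqP->]]; by ss.
Qed.

Lemma sfne w : sface w != w.
Proof.
case: w => [d|[]] //=.
do 4 (case: ifP => // _). rewrite inj_eq ?fne //; exact: inl_inj.
Qed.

Lemma se2 w : sedge (sedge w) = w.
Proof.
case: w => [d|[]]; try by ss.
case: (eqVneq d x) => [->|dx]; first by ss.
case: (eqVneq d ex) => [->|dex]; first by ss.
rewrite /sedge (negbTE dx) (negbTE dex).
have -> : (edge d == x) = false by apply/negbTE; apply: contra dex => /eqP <-; rewrite e2 eqxx.
have -> : (edge d == ex) = false by rewrite (inj_eq (edge_inj e2)) (negbTE dx).
by rewrite e2.
Qed.

Lemma sene w : sedge w != w.
Proof.
case: w => [d|[]] //=.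
do 2 (case: ifP => // _). rewrite inj_eq ?ene //; exact: inl_inj.
Qed.

Local Notation r := (Defs.rot face edge).
Local Notation r' := (Defs.rot sface sedge).

Lemma sr'inj : injective r'. Proof. exact: drot_inj sf3 se2. Qed.
Lemma srinj : injective r. Proof. exact: drot_inj f3 e2. Qed.

Lemma sr_x : r' (inl x) = inl (r x). Proof. by rewrite /Defs.rot; ss. Qed.
Lemma sr_ex : r' (inl ex) = inl (r ex). Proof. by rewrite /Defs.rot; ss. Qed.
Lemma sr_fx d : edge d = fx -> r' (inl d) = inr S3.
Proof.
move=> h.
have dx : (d == x) = false.
  by apply/negbTE/eqP => dx; move/eqP: hx1; apply; rewrite -h dx.
have dex : (d == ex) = false.
  apply/negbTE/eqP => dex; have := fne x; by rewrite -h dex e2 eqxx.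
by rewrite /Defs.rot /= /sedge dx dex /= h; ss.
Qed.
Lemma sr_fex d : edge d = fex -> r' (inl d) = inr S6.
Proof.
move=> h.
have dx : (d == x) = false.
  apply/negbTE/eqP => dx; have := fne (edge x); by rewrite -h dx eqxx.
have dex : (d == ex) = false.
  apply/negbTE/eqP => dex; have := c4; by rewrite -h dex e2 eqxx.
by rewrite /Defs.rot /= /sedge dx dex /= h; ss.
Qed.
Lemma sr_old d : d != x -> d != ex -> edge d != fx -> edge d != fex ->
  r' (inl d) = inl (r d).
Proof.
move=> dx dex h1 h2.
have e1 : (edge d == x) = false.
  by apply/negbTE; apply: contra dex => /eqP <-; rewrite e2 eqxx.
have e3 : (edge d == ex) = false by rewrite (inj_eq (edge_inj e2)) (negbTE dx).
by rewrite /Defs.rot /= /sedge /sface (negbTE dx) (negbTE dex) e1 e3 (negbTE h1) (negbTE h2).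
Qed.

Lemma siter_conn n w v : iter n r' w = v -> fconnect r' w v.
Proof. move=> <-; exact: fconnect_iter. Qed.

Lemma ssim d : fconnect r' (inl d) (inl (r d)).
Proof.
case: (eqVneq d x) => [->|dx]; first by rewrite -sr_x; exact: fconnect1.
case: (eqVneq d ex) => [->|dex]; first by rewrite -sr_ex; exact: fconnect1.
case: (eqVneq (edge d) fx) => [h|h1].
  apply: (@siter_conn 2); rewrite /= sr_fx // /Defs.rot h; by ss.
case: (eqVneq (edge d) fex) => [h|h2].
  apply: (@siter_conn 2); rewrite /= sr_fex // /Defs.rot h; by ss.
by rewrite -sr_old //; exact: fconnect1.
Qed.

Lemma sfroot_rot d : froot r (r d) = froot r d.
Proof. apply/esym/(rootP (rsym srinj)); exact: fconnect1. Qed.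

Definition slab (w : D') : option D :=
  match w with
  | inl d => Some (froot r d)
  | inr h => match h with
    | S3 => Some (froot r ffx)
    | S6 => Some (froot r ffex)
    | _ => None end
  end.

Lemma slab_inv w : slab (r' w) = slab w.
Proof.
case: w => [d|[]]; try by rewrite /Defs.rot /=; ss.
case: (eqVneq d x) => [->|dx]; first by rewrite sr_x /= sfroot_rot.
case: (eqVneq d ex) => [->|dex]; first by rewrite sr_ex /= sfroot_rot.
case: (eqVneq (edge d) fx) => [h|h1].
  by rewrite sr_fx //= -[in RHS]sfroot_rot /Defs.rot h.
case: (eqVneq (edge d) fex) => [h|h2].
  by rewrite sr_fex //= -[in RHS]sfroot_rot /Defs.rot h.
by rewrite sr_old //= sfroot_rot.
Qed.

Lemma srep w c : slab w = Some c -> exists d, fconnect r' w (inl d).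
Proof.
case: w => [d|[]] //= _; first by exists d.
- by exists ffx; apply: (@siter_conn 1); rewrite /= /Defs.rot; ss.
- by exists ffex; apply: (@siter_conn 1); rewrite /= /Defs.rot; ss.
Qed.

Lemma s_cyc : fcycle r' [:: inr S1; inr S2; inr S4; inr S5].
Proof. by rewrite /= /Defs.rot; ss. Qed.

Lemma snone w : slab w = None -> fconnect r' (inr S1) w /\ fconnect r' w (inr S1).
Proof.
case: w => [d|[]] //= _.
- by split; [apply: (@siter_conn 1) | apply: (@siter_conn 3)]; rewrite /= /Defs.rot; ss.
- by split; [apply: (@siter_conn 2) | apply: (@siter_conn 2)]; rewrite /= /Defs.rot; ss.
- by split; [apply: (@siter_conn 3) | apply: (@siter_conn 1)]; rewrite /= /Defs.rot; ss.
Qed.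

Lemma snone_conn w v : slab w = None -> slab v = None -> fconnect r' w v.
Proof.
move=> /snone [_ h1] /snone [h2 _]; exact: connect_trans h1 h2.
Qed.

Lemma s_fcard : nb_punctures sface sedge = (nb_punctures face edge).+1.
Proof.
rewrite /nb_punctures.
apply: (lift_fcard_none srinj sr'inj ssim (lab' := slab)) => //.
- exact: slab_inv.
- exact: srep.
- exact: snone_conn.
- by exists (inr S1).
Qed.

Lemma s_order4 : order r' (inr S1) = 4.
Proof.
by apply: (order_cycle s_cyc).
Qed.

Lemma s_order w : (exists d, order r d <= order r' w) \/ order r' w = 4.
Proof.
case hw: (slab w) => [c|].
  left; have [d hd] := srep hw; exists d.
  rewrite (order_conn sr'inj hd).
  apply: (lift_order srinj sr'inj inl_inj ssim (lab' := slab)) => //.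
  - exact: slab_inv.
  - exact: srep.
  - exact: snone_conn.
right; have [h _] := snone hw; by rewrite -(order_conn sr'inj h) s_order4.
Qed.

Lemma s_conn : (forall a b, connect (E face edge) a b) ->
  forall a b, connect (E sface sedge) a b.
Proof.
move=> conn.
have estep a : connect (E sface sedge) (inl a) (inl (edge a)).
  case: (eqVneq a x) => [->|ax].
    apply: (connect_trans (y := inr S5)); first by apply: connect1; rewrite /E; ss; rewrite ?orbT.
    apply: (connect_trans (y := inr S2)).
      apply: rot_connE; apply: (@siter_conn 2); rewrite /= /Defs.rot; by ss.
    by apply: connect1; rewrite /E; ss; rewrite ?orbT.
  case: (eqVneq a ex) => [->|aex].
    apply: (connect_trans (y := inr S2)); first by apply: connect1; rewrite /E; ss; rewrite ?orbT.
    apply: (connect_trans (y := inr S5)).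
      apply: rot_connE; apply: (@siter_conn 2); rewrite /= /Defs.rot; by ss.
    by apply: connect1; rewrite /E; ss; rewrite ?orbT.
  by apply: connect1; rewrite /E /sedge (negbTE ax) (negbTE aex) eqxx orbT.
have old a b : connect (E sface sedge) (inl a) (inl b).
  apply: (conn_map (e := E face edge)) => // {}a {}b /orP [] /eqP ->; last exact: estep.
  apply: connect_trans (estep a) _.
  have := ssim (edge a); rewrite /Defs.rot e2 => h; exact: rot_connE h.
have rep2 w : exists d, connect (E sface sedge) w (inl d) /\ connect (E sface sedge) (inl d) w.
  case hw: (slab w) => [c|].
    have [d hd] := srep hw; exists d; split; first exact: rot_connE.
    by apply: rot_connE; rewrite fconnect_sym //; exact: sr'inj.
  have [h1 h2] := snone hw.
  exists ffx; split.
    apply: connect_trans (rot_connE h2) _.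
    by apply: connect1; rewrite /E; ss.
  apply: connect_trans _ (rot_connE h1).
  apply: (connect_trans (y := inl x)); first by apply: connect1; rewrite /E; ss.
  by apply: connect1; rewrite /E; ss.
move=> a b.
have [da [ha _]] := rep2 a; have [db [_ hb]] := rep2 b.
exact: connect_trans ha (connect_trans (old da db) hb).
Qed.
End Subdiv.

Lemma card_N6 : #|{: N6}| = 6.
Proof. rewrite /= card.unlock /enum_mem /= Finite.enum.unlock. by vm_compute. Qed.

Lemma good_dart (D : finType) (face edge : D -> D) (d : D) :
  (forall d, face (face (face d)) = d) -> (forall d, face d != d) ->
  (forall d, edge (edge d) = d) -> (forall d, edge d != d) ->
  exists x, (edge x != face x) && (edge x != face (face x)).
Proof.
move=> f3 fne e2 ene.
have einj : injective edge by exact: edge_inj e2.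
have ffne a : face (face a) != a.
  apply/eqP => h; have := f3 a; rewrite h => /eqP; by rewrite (negbTE (fne a)).
have fffne a : face (face a) != face a by exact: fne.
case: (eqVneq (edge d) (face d)) => [h1|h1].
  exists (face (face d)); rewrite f3; apply/andP; split; apply/eqP => h;
    have := congr1 edge h; rewrite e2.
  - rewrite h1 => /eqP; by rewrite (negbTE (fffne d)).
  - have := congr1 edge h1; rewrite e2 => <- /eqP; by rewrite (negbTE (ffne d)).
case: (eqVneq (edge d) (face (face d))) => [h2|h2]; last by exists d; rewrite h1 h2.
exists (face d); rewrite f3; apply/andP; split; apply/eqP => h.
- move: h; rewrite -h2 => /einj /eqP; by rewrite (negbTE (fne d)).
- have := congr1 edge h; rewrite e2 h2 => /eqP; by rewrite eq_sym (negbTE (fffne d)).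
Qed.

Lemma subdiv_step (D : finType) (face edge : D -> D) g p :
  ideal_triangulation face edge g p -> T4 face edge -> 0 < p ->
  exists (D' : finType) (face' edge' : D' -> D'),
    ideal_triangulation face' edge' g p.+1 /\ T4 face' edge'.
Proof.
move=> [[f3 fne e2 ene conn] [np eu]] t4 p0.
have [d0 _] : exists x : D, x \in D.
  apply/card_gt0P; rewrite -np /nb_punctures in p0.
  by apply: leq_trans p0 _; rewrite nroots; apply: subset_leq_card; apply/subsetP.
have [x /andP [hx1 hx2]] := good_dart d0 f3 fne e2 ene.
exists (D + N6)%type, (sface face edge x), (sedge edge x); split.
  apply: ideal_mk.
  - exact: sf3.
  - exact: sfne.
  - exact: se2.
  - exact: sene.
  - exact: s_conn.
  - by rewrite s_fcard // np.
  - rewrite card_sum card_N6; lia.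
move=> w; rewrite /valence.
have [[d hd]|->] : (exists d, order (Defs.rot face edge) d <= order (Defs.rot (sface face edge x) (sedge edge x)) w)
     \/ order (Defs.rot (sface face edge x) (sedge edge x)) w = 4.
  by apply: s_order.
- exact: leq_trans (t4 d) hd.
- by [].
Qed.


Inductive tor := tor_0 | tor_1 | tor_2 | tor_3 | tor_4 | tor_5.
Definition tor_nat (x : tor) : nat := match x with tor_0 => 0 | tor_1 => 1 | tor_2 => 2 | tor_3 => 3 | tor_4 => 4 | tor_5 => 5 end.
Definition nat_tor (k : nat) : tor := match k with 0 => tor_0 | 1 => tor_1 | 2 => tor_2 | 3 => tor_3 | 4 => tor_4 | _ => tor_5 end.
Lemma tor_natK : cancel tor_nat nat_tor. Proof. by case. Qed.
HB.instance Definition _ := Countable.copy tor (can_type tor_natK).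
Definition tor_enum := [:: tor_0; tor_1; tor_2; tor_3; tor_4; tor_5].
Lemma tor_enumP : Finite.axiom tor_enum. Proof. by case. Qed.
HB.instance Definition _ := isFinite.Build tor tor_enumP.
Definition tor_face (x : tor) : tor := match x with tor_0 => tor_4 | tor_1 => tor_5 | tor_2 => tor_0 | tor_3 => tor_1 | tor_4 => tor_2 | tor_5 => tor_3 end.
Definition tor_edge (x : tor) : tor := match x with tor_0 => tor_3 | tor_1 => tor_4 | tor_2 => tor_5 | tor_3 => tor_0 | tor_4 => tor_1 | tor_5 => tor_2 end.
Inductive oct := oct_0 | oct_1 | oct_2 | oct_3 | oct_4 | oct_5 | oct_6 | oct_7 | oct_8 | oct_9 | oct_10 | oct_11 | oct_12 | oct_13 | oct_14 | oct_15 | oct_16 | oct_17 | oct_18 | oct_19 | oct_20 | oct_21 | oct_22 | oct_23.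
Definition oct_nat (x : oct) : nat := match x with oct_0 => 0 | oct_1 => 1 | oct_2 => 2 | oct_3 => 3 | oct_4 => 4 | oct_5 => 5 | oct_6 => 6 | oct_7 => 7 | oct_8 => 8 | oct_9 => 9 | oct_10 => 10 | oct_11 => 11 | oct_12 => 12 | oct_13 => 13 | oct_14 => 14 | oct_15 => 15 | oct_16 => 16 | oct_17 => 17 | oct_18 => 18 | oct_19 => 19 | oct_20 => 20 | oct_21 => 21 | oct_22 => 22 | oct_23 => 23 end.
Definition nat_oct (k : nat) : oct := match k with 0 => oct_0 | 1 => oct_1 | 2 => oct_2 | 3 => oct_3 | 4 => oct_4 | 5 => oct_5 | 6 => oct_6 | 7 => oct_7 | 8 => oct_8 | 9 => oct_9 | 10 => oct_10 | 11 => oct_11 | 12 => oct_12 | 13 => oct_13 | 14 => oct_14 | 15 => oct_15 | 16 => oct_16 | 17 => oct_17 | 18 => oct_18 | 19 => oct_19 | 20 => oct_20 | 21 => oct_21 | 22 => oct_22 | _ => oct_23 end.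
Lemma oct_natK : cancel oct_nat nat_oct. Proof. by case. Qed.
HB.instance Definition _ := Countable.copy oct (can_type oct_natK).
Definition oct_enum := [:: oct_0; oct_1; oct_2; oct_3; oct_4; oct_5; oct_6; oct_7; oct_8; oct_9; oct_10; oct_11; oct_12; oct_13; oct_14; oct_15; oct_16; oct_17; oct_18; oct_19; oct_20; oct_21; oct_22; oct_23].
Lemma oct_enumP : Finite.axiom oct_enum. Proof. by case. Qed.
HB.instance Definition _ := isFinite.Build oct oct_enumP.
Definition oct_face (x : oct) : oct := match x with oct_0 => oct_1 | oct_1 => oct_2 | oct_2 => oct_0 | oct_3 => oct_4 | oct_4 => oct_5 | oct_5 => oct_3 | oct_6 => oct_7 | oct_7 => oct_8 | oct_8 => oct_6 | oct_9 => oct_10 | oct_10 => oct_11 | oct_11 => oct_9 | oct_12 => oct_13 | oct_13 => oct_14 | oct_14 => oct_12 | oct_15 => oct_16 | oct_16 => oct_17 | oct_17 => oct_15 | oct_18 => oct_19 | oct_19 => oct_20 | oct_20 => oct_18 | oct_21 => oct_22 | oct_22 => oct_23 | oct_23 => oct_21 end.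
Definition oct_edge (x : oct) : oct := match x with oct_0 => oct_20 | oct_1 => oct_4 | oct_2 => oct_6 | oct_3 => oct_11 | oct_4 => oct_1 | oct_5 => oct_21 | oct_6 => oct_2 | oct_7 => oct_10 | oct_8 => oct_12 | oct_9 => oct_17 | oct_10 => oct_7 | oct_11 => oct_3 | oct_12 => oct_8 | oct_13 => oct_16 | oct_14 => oct_18 | oct_15 => oct_23 | oct_16 => oct_13 | oct_17 => oct_9 | oct_18 => oct_14 | oct_19 => oct_22 | oct_20 => oct_0 | oct_21 => oct_5 | oct_22 => oct_19 | oct_23 => oct_15 end.
Inductive bp3 := bp3_0 | bp3_1 | bp3_2 | bp3_3 | bp3_4 | bp3_5 | bp3_6 | bp3_7 | bp3_8 | bp3_9 | bp3_10 | bp3_11 | bp3_12 | bp3_13 | bp3_14 | bp3_15 | bp3_16 | bp3_17.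
Definition bp3_nat (x : bp3) : nat := match x with bp3_0 => 0 | bp3_1 => 1 | bp3_2 => 2 | bp3_3 => 3 | bp3_4 => 4 | bp3_5 => 5 | bp3_6 => 6 | bp3_7 => 7 | bp3_8 => 8 | bp3_9 => 9 | bp3_10 => 10 | bp3_11 => 11 | bp3_12 => 12 | bp3_13 => 13 | bp3_14 => 14 | bp3_15 => 15 | bp3_16 => 16 | bp3_17 => 17 end.
Definition nat_bp3 (k : nat) : bp3 := match k with 0 => bp3_0 | 1 => bp3_1 | 2 => bp3_2 | 3 => bp3_3 | 4 => bp3_4 | 5 => bp3_5 | 6 => bp3_6 | 7 => bp3_7 | 8 => bp3_8 | 9 => bp3_9 | 10 => bp3_10 | 11 => bp3_11 | 12 => bp3_12 | 13 => bp3_13 | 14 => bp3_14 | 15 => bp3_15 | 16 => bp3_16 | _ => bp3_17 end.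
Lemma bp3_natK : cancel bp3_nat nat_bp3. Proof. by case. Qed.
HB.instance Definition _ := Countable.copy bp3 (can_type bp3_natK).
Definition bp3_enum := [:: bp3_0; bp3_1; bp3_2; bp3_3; bp3_4; bp3_5; bp3_6; bp3_7; bp3_8; bp3_9; bp3_10; bp3_11; bp3_12; bp3_13; bp3_14; bp3_15; bp3_16; bp3_17].
Lemma bp3_enumP : Finite.axiom bp3_enum. Proof. by case. Qed.
HB.instance Definition _ := isFinite.Build bp3 bp3_enumP.
Definition bp3_face (x : bp3) : bp3 := match x with bp3_0 => bp3_1 | bp3_1 => bp3_2 | bp3_2 => bp3_0 | bp3_3 => bp3_4 | bp3_4 => bp3_5 | bp3_5 => bp3_3 | bp3_6 => bp3_7 | bp3_7 => bp3_8 | bp3_8 => bp3_6 | bp3_9 => bp3_10 | bp3_10 => bp3_11 | bp3_11 => bp3_9 | bp3_12 => bp3_13 | bp3_13 => bp3_14 | bp3_14 => bp3_12 | bp3_15 => bp3_16 | bp3_16 => bp3_17 | bp3_17 => bp3_15 end.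
Definition bp3_edge (x : bp3) : bp3 := match x with bp3_0 => bp3_14 | bp3_1 => bp3_4 | bp3_2 => bp3_6 | bp3_3 => bp3_11 | bp3_4 => bp3_1 | bp3_5 => bp3_15 | bp3_6 => bp3_2 | bp3_7 => bp3_10 | bp3_8 => bp3_12 | bp3_9 => bp3_17 | bp3_10 => bp3_7 | bp3_11 => bp3_3 | bp3_12 => bp3_8 | bp3_13 => bp3_16 | bp3_14 => bp3_0 | bp3_15 => bp3_5 | bp3_16 => bp3_13 | bp3_17 => bp3_9 end.
Inductive tet := tet_0 | tet_1 | tet_2 | tet_3 | tet_4 | tet_5 | tet_6 | tet_7 | tet_8 | tet_9 | tet_10 | tet_11.
Definition tet_nat (x : tet) : nat := match x with tet_0 => 0 | tet_1 => 1 | tet_2 => 2 | tet_3 => 3 | tet_4 => 4 | tet_5 => 5 | tet_6 => 6 | tet_7 => 7 | tet_8 => 8 | tet_9 => 9 | tet_10 => 10 | tet_11 => 11 end.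
Definition nat_tet (k : nat) : tet := match k with 0 => tet_0 | 1 => tet_1 | 2 => tet_2 | 3 => tet_3 | 4 => tet_4 | 5 => tet_5 | 6 => tet_6 | 7 => tet_7 | 8 => tet_8 | 9 => tet_9 | 10 => tet_10 | _ => tet_11 end.
Lemma tet_natK : cancel tet_nat nat_tet. Proof. by case. Qed.
HB.instance Definition _ := Countable.copy tet (can_type tet_natK).
Definition tet_enum := [:: tet_0; tet_1; tet_2; tet_3; tet_4; tet_5; tet_6; tet_7; tet_8; tet_9; tet_10; tet_11].
Lemma tet_enumP : Finite.axiom tet_enum. Proof. by case. Qed.
HB.instance Definition _ := isFinite.Build tet tet_enumP.
Definition tet_face (x : tet) : tet := match x with tet_0 => tet_1 | tet_1 => tet_2 | tet_2 => tet_0 | tet_3 => tet_4 | tet_4 => tet_5 | tet_5 => tet_3 | tet_6 => tet_7 | tet_7 => tet_8 | tet_8 => tet_6 | tet_9 => tet_10 | tet_10 => tet_11 | tet_11 => tet_9 end.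
Definition tet_edge (x : tet) : tet := match x with tet_0 => tet_8 | tet_1 => tet_9 | tet_2 => tet_3 | tet_3 => tet_2 | tet_4 => tet_11 | tet_5 => tet_6 | tet_6 => tet_5 | tet_7 => tet_10 | tet_8 => tet_0 | tet_9 => tet_1 | tet_10 => tet_7 | tet_11 => tet_4 end.

Ltac unl := rewrite /nb_punctures /valence /order /n_comp_mem /roots /root /connect /pick /rgraph /FiniteQuant.quant0b /pred0b /= ?card.unlock /enum_mem /= ?Finite.enum.unlock.

Lemma base_it (D : finType) (face edge : D -> D) g p :
  (forall d, face (face (face d)) = d) -> (forall d, face d != d) ->
  (forall d, edge (edge d) = d) -> (forall d, edge d != d) ->
  [forall x, forall y, connect (fun a b => (b == face a) || (b == edge a)) x y] = true ->
  nb_punctures face edge = p -> p + #|D| %/ 3 + 2 * g = #|D| %/ 2 + 2 ->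
  ideal_triangulation face edge g p.
Proof.
move=> h1 h2 h3 h4 h5 h6 h7; split; last by split.
split=> // x y; by move/forallP: h5 => /(_ x)/forallP/(_ y).
Qed.

Ltac base_tac := apply: base_it; [by case|by case|by case|by case|unl; vm_compute; reflexivity|unl; vm_compute; reflexivity|unl; vm_compute; reflexivity].

Lemma T4_it (D : finType) (face edge : D -> D) :
  [forall d, 4 <= valence face edge d] = true -> T4 face edge.
Proof. by move/forallP. Qed.

Lemma T3_it (D : finType) (face edge : D -> D) :
  [forall d, 3 <= valence face edge d] = true -> T3 face edge.
Proof. by move/forallP. Qed.

Lemma T3half_it (D : finType) (face edge : D -> D) :
  [forall d, 3 <= valence face edge d] = true ->
  [forall d, (4 <= valence face edge d) || (4 <= valence face edge (edge d))] = true ->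
  T3half face edge.
Proof. move=> /forallP h1 /forallP h2; split=> // d; exact/orP. Qed.

Lemma tor_ok : ideal_triangulation tor_face tor_edge 1 1 /\ T4 tor_face tor_edge.
Proof. split; [base_tac | apply: T4_it; unl; vm_compute; reflexivity]. Qed.
Lemma oct_ok : ideal_triangulation oct_face oct_edge 0 6 /\ T4 oct_face oct_edge.
Proof. split; [base_tac | apply: T4_it; unl; vm_compute; reflexivity]. Qed.
Lemma bp3_ok : ideal_triangulation bp3_face bp3_edge 0 5 /\ T3half bp3_face bp3_edge.
Proof. split; [base_tac | apply: T3half_it; unl; vm_compute; reflexivity]. Qed.
Lemma tet_ok : ideal_triangulation tet_face tet_edge 0 4 /\ T3 tet_face tet_edge.
Proof. split; [base_tac | apply: T3_it; unl; vm_compute; reflexivity]. Qed.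

Definition good g p := exists (D : finType) (face edge : D -> D),
  ideal_triangulation face edge g p /\ T4 face edge.

Lemma good_p g p k : 0 < p -> good g p -> good g (p + k).
Proof.
move=> p0; elim: k => [|k IH]; first by rewrite addn0.
move=> h; have [D [face [edge [h1 h2]]]] := IH h.
rewrite addnS; apply: subdiv_step h1 h2 _; lia.
Qed.

Lemma good_g g : good g.+1 1.
Proof.
elim: g => [|g [D [face [edge [h1 h2]]]]].
  by exists tor, tor_face, tor_edge; exact: tor_ok.
exact: handle_step h1 h2 _.
Qed.

Theorem proposition5p1 :
  (* (a) genus g, p >= 1 punctures, not a sphere with <= 5 punctures *)
  (forall g p : nat, 1 <= p -> (1 <= g \/ 6 <= p) ->
     exists (D : finType) (face edge : D -> D),
       ideal_triangulation face edge g p /\ T4 face edge) /\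
  (* (b) sphere with 5 punctures *)
  ((exists (D : finType) (face edge : D -> D),
       ideal_triangulation face edge 0 5 /\ T3half face edge) /\
   ~ (exists (D : finType) (face edge : D -> D),
       ideal_triangulation face edge 0 5 /\ T4 face edge)) /\
  (* (c) sphere with 4 punctures *)
  ((exists (D : finType) (face edge : D -> D),
       ideal_triangulation face edge 0 4 /\ T3 face edge) /\
   ~ (exists (D : finType) (face edge : D -> D),
       ideal_triangulation face edge 0 4 /\ T3half face edge)).
Proof.
split; [|split; split].
- move=> g p p1 [g1|p6].
    case: g g1 => // g _.
    have -> : p = 1 + (p - 1) by lia.
    apply: good_p => //; exact: good_g.
  case: (posnP g) => [->|g1].
    have -> : p = 6 + (p - 6) by lia.
    apply: good_p => //; by exists oct, oct_face, oct_edge; exact: oct_ok.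
  case: g g1 => // g _.
  have -> : p = 1 + (p - 1) by lia.
  apply: good_p => //; exact: good_g.
- by exists bp3, bp3_face, bp3_edge; exact: bp3_ok.
- by move=> [D [face [edge h]]]; exact: not_T4_5 h.
- by exists tet, tet_face, tet_edge; exact: tet_ok.
- by move=> [D [face [edge h]]]; exact: not_T3half_4 h.
Qed.
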